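(* Let $\mathcal{C}$ be a finite set of latent classes with cardinality $N_{\mathcal{C}}$, let $\rho$ be the uniform distribution on $\mathcal{C}$, and for each $c\in\mathcal{C}$ let $\mathcal{D}_c$ be a distribution on a feature space $\mathcal{X}$. Let $N\ge1$ and let $k$ be an integer with $2\le k+1\le N_{\mathcal{C}}$. Then every encoder $f:\mathcal{X}\to\mathbb{R}^d$ satisfies $$L_{\mathrm{sup},k}(f)\le L^\mu_{\mathrm{sup},k}(f)\le\frac{k}{1-\tau_N^+}\big(L^N_{\mathrm{un}}(f)-\tau_N^+\log(N+1)\big),$$ where $\tau_N^+=\mathbb{P}[c_i=c\ \forall i\mid (c,c_1,\dots,c_N)\sim\rho^{\otimes(N+1)}]$.
   Context: Positive pairs are drawn from $\mathcal{D}_{\mathrm{sim}}(x,x^+)=\sum_{c}\rho(c)\mathcal{D}_c(x)\mathcal{D}_c(x^+)$ and negatives from $\mathcal{D}_{\mathrm{neg}}(x^-)=\sum_c\rho(c)\mathcal{D}_c(x^-)$. The unsupervised loss with $N$ negatives is $$L^N_{\mathrm{un}}(f)=\mathbb{E}_{(x,x^+)\sim\mathcal{D}_{\mathrm{sim}},\,X^-\sim\mathcal{D}_{\mathrm{neg}}^{\otimes N}}\Big[-\log\frac{\exp(f(x)^Tf(x^+))}{\exp(f(x)^Tf(x^+))+\sum_{x^-\in X^-}\exp(f(x)^Tf(x^-))}\Big].$$ A $(k+1)$-way task is a subset $\mathcal{T}\subseteq\mathcal{C}$ with $|\mathcal{T}|=k+1$; it induces $\mathcal{D}_{\mathcal{T}}(c)=\rho(c\mid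 c\in\mathcal{T})$ and $\mathcal{D}_{\mathcal{T}}(x,c)=\mathcal{D}_{\mathcal{T}}(c)\mathcal{D}_c(x)$. The supervised loss on $\mathcal{T}$ is $$L_{\mathrm{sup}}(f,\mathcal{T})=\inf_{W\in\mathbb{R}^{|\mathcal{T}|\times d}}\mathbb{E}_{(x,c)\sim\mathcal{D}_{\mathcal{T}}}\Big[-\log\frac{\exp((Wf(x))_c)}{\sum_{c'\in\mathcal{T}}\exp((Wf(x))_{c'})}\Big],$$ and $L^\mu_{\mathrm{sup}}(f,\mathcal{T})$ is the same expectation evaluated at the mean classifier $W^\mu$ with rows $W^\mu_{c,:}=\mathbb{E}_{x\sim\mathcal{D}_c}[f(x)]$, $c\in\mathcal{T}$. Finally $L_{\mathrm{sup},k}(f)=\mathbb{E}_{\mathcal{T}\sim\mathcal{D}^{k+1}}[L_{\mathrm{sup}}(f,\mathcal{T})]$ and $L^\mu_{\mathrm{sup},k}(f)=\mathbb{E}_{\mathcal{T}\sim\mathcal{D}^{k+1}}[L^\mu_{\mathrm{sup}}(f,\mathcal{T})]$, where $\mathcal{D}^{k+1}$ is the uniform distribution over subsets of $k+1$ distinct classes of $\mathcal{C}$. *)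

(* Defs.v *)
From HB Require Import structures.
From mathcomp Require Import all_boot all_order all_algebra.
From mathcomp Require Import all_classical all_reals all_analysis.
Set Implicit Arguments. Unset Strict Implicit. Unset Printing Implicit Defensive.
Import Order.TTheory GRing.Theory Num.Theory.
Import numFieldNormedType.Exports.
Local Open Scope classical_set_scope.
Local Open Scope ring_scope.

Section Contrastive.
Context {R : realType} {dX : measure_display} {X : measurableType dX}
  {C : finType} {dim : nat}.
Variable (D : C -> probability X R).
Variable (f : X -> 'rV[R]_dim).

Definition dotv (u v : 'rV[R]_dim) : R := \sum_(i < dim) u 0 i * v 0 i.

Definition rho (c : C) : R := #|C|%:R^-1.

Definition neg_int (g : X -> \bar R) : \bar R :=
  (\sum_(c : C) (rho c)%:E * \int[D c]_x g x)%E.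

(* E_{X^- ~ D_neg^{(x) n}}[F X^-], as iterated integral over the n factors *)
Fixpoint negs_int (n : nat) (F : seq X -> \bar R) : \bar R :=
  match n with
  | 0 => F [::]
  | n'.+1 => neg_int (fun x => negs_int n' (fun s => F (x :: s)))
  end.

Definition contrast_loss (x xp : X) (xs : seq X) : R :=
  - ln (expR (dotv (f x) (f xp)) /
        (expR (dotv (f x) (f xp)) + \sum_(y <- xs) expR (dotv (f x) (f y)))).

(* L^N_un(f); (x, x^+) ~ D_sim = sum_c rho(c) D_c(x) D_c(x^+) *)
Definition L_un (N : nat) : \bar R :=
  (\sum_(c : C) (rho c)%:E *
     \int[D c]_x \int[D c]_xp negs_int N (fun xs => (contrast_loss x xp xs)%:E))%E.

Definition rho_cond (T : {set C}) (c : C) : R :=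
  rho c / \sum_(c' in T) rho c'.

Definition sup_loss (T : {set C}) (W : C -> 'rV[R]_dim) (x : X) (c : C) : R :=
  - ln (expR (dotv (W c) (f x)) / \sum_(c' in T) expR (dotv (W c') (f x))).

Definition sup_risk (T : {set C}) (W : C -> 'rV[R]_dim) : \bar R :=
  (\sum_(c in T) (rho_cond T c)%:E * \int[D c]_x (sup_loss T W x c)%:E)%E.

(* L_sup(f, T): infimum over all linear classifiers W in R^{|T| x d}
   (rows indexed by c in T; rows outside T are irrelevant) *)
Definition L_sup (T : {set C}) : \bar R :=
  ereal_inf [set sup_risk T W | W in [set: C -> 'rV[R]_dim]].

Definition mean_classifier (c : C) : 'rV[R]_dim :=
  \row_(i < dim) fine (\int[D c]_x (f x 0 i)%:E)%E.

Definition L_sup_mu (T : {set C}) : \bar R := sup_risk T mean_classifier.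

(* T ~ D^{k+1}: uniform over subsets of C with k+1 distinct classes *)
Definition tasks (k : nat) : {set {set C}} := [set T : {set C} | #|T| == k.+1].

Definition L_sup_k (k : nat) : \bar R :=
  ((#|tasks k|%:R^-1)%:E * \sum_(T in tasks k) L_sup T)%E.

Definition L_sup_mu_k (k : nat) : \bar R :=
  ((#|tasks k|%:R^-1)%:E * \sum_(T in tasks k) L_sup_mu T)%E.

End Contrastive.

Definition tau_plus {R : realType} (C : finType) (N : nat) : R :=
  \sum_(cc : C * (N.-tuple C) | all (fun ci => ci == cc.1) cc.2)
     (@rho R C cc.1 * \prod_(i < N) @rho R C (tnth cc.2 i)).

(* Main.v *)
Require Import Defs.
From HB Require Import structures.
From mathcomp Require Import all_boot all_order all_algebra.
From mathcomp Require Import all_classical all_reals all_analysis.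
From mathcomp Require Import fingroup perm.
From mathcomp Require Import ring lra.
Import Order.TTheory GRing.Theory Num.Theory.
Local Open Scope classical_set_scope.
Local Open Scope ring_scope.
Section Mono.
Context {R : realType} {dX : measure_display} {X : measurableType dX}.
Local Open Scope ereal_scope.
Lemma int_mono (mu : {measure set X -> \bar R}) (F G : X -> \bar R) :
  (forall x, 0 <= F x) -> (forall x, G x <= F x) -> \int[mu]_x G x <= \int[mu]_x F x.
Proof.
move=> F0 GF.
rewrite (integralE _ _ G).
apply: (@le_trans _ _ (\int[mu]_x G^\+ x)).
  rewrite -[leRHS]sube0; apply: leeB => //.
  by apply: integral_ge0 => x _; exact: funeneg_ge0.
rewrite ge0_integralTE; last by move=> x; exact: funepos_ge0.
rewrite ge0_integralTE //.
apply: le_ereal_sup => _ /= [h /= hG <-]; exists h => //= x.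
apply: le_trans (hG x) _.
by rewrite funeposE ge_max GF F0.
Qed.
End Mono.

Section Tangent.
Context {R : realType}.
Lemma sum_exp_gt0 (l : seq (R*R)) : (0 < size l)%N -> 0 < \sum_(p <- l) expR p.2.
Proof.
case: l => // p l _; rewrite big_cons ltr_wpDr ?expR_gt0 //.
by apply: sumr_ge0 => q _; rewrite ltW ?expR_gt0.
Qed.

Lemma lse_tangent (l : seq (R*R)) : (0 < size l)%N ->
  ln (\sum_(p <- l) expR p.2) +
  \sum_(p <- l) (expR p.2 / \sum_(q <- l) expR q.2) * (p.1 - p.2)
  <= ln (\sum_(p <- l) expR p.1).
Proof.
move=> hl; have Sv0 := sum_exp_gt0 l hl.
set Sv := \sum_(q <- l) expR q.2 in Sv0 *.
set M := \sum_(p <- l) _.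
have HM : M * Sv = \sum_(p <- l) expR p.2 * (p.1 - p.2).
  rewrite /M mulr_suml; apply: eq_bigr => p _.
  by rewrite mulrAC -mulrA mulrA divfK ?gt_eqF.

have key : expR M * Sv <= \sum_(p <- l) expR p.1.
  apply: (@le_trans _ _ (\sum_(p <- l) expR M * (expR p.2 + expR p.2 * (p.1 - p.2) - expR p.2 * M))).
    rewrite -mulr_sumr; apply: ler_wpM2l; first by rewrite ltW ?expR_gt0.
    rewrite big_split /= big_split /= sumrN -HM -mulr_suml -/Sv.
    by rewrite -addrA [_ * M]mulrC subrr addr0.
  apply: ler_sum => p _.
  have -> : expR p.1 = expR M * expR p.2 * expR (p.1 - p.2 - M).
    by rewrite -!expRD; congr expR; ring.
  rewrite -mulrA; apply: ler_wpM2l; first by rewrite ltW ?expR_gt0.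
  have := expR_ge1Dx (p.1 - p.2 - M).
  have := expR_gt0 p.2 => e0 h.
  rewrite -(ler_pM2l e0) in h. lra.
have pos : 0 < \sum_(p <- l) expR p.1.
  by apply: lt_le_trans key; rewrite mulr_gt0 ?expR_gt0.
by rewrite -ler_expR expRD !lnK ?posrE // mulrC.
Qed.
End Tangent.

Section Comb.
Context {R : realType} {C : finType}.

Lemma big_tuple_cons (F : seq C -> R) n :
  \sum_(t : n.+1.-tuple C) F t = \sum_(c : C) \sum_(t : n.-tuple C) F (c :: t).
Proof.
rewrite pair_big /=.
rewrite (reindex (fun p : C * n.-tuple C => [tuple of p.1 :: p.2])) /=; last first.
  exists (fun t : n.+1.-tuple C => (thead t, [tuple of behead t])).
    move=> [a t] _ /=; congr pair.
    by apply: val_inj.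
  move=> t _; apply: val_inj => /=.
  by case: t => -[|a s] //= _.
by apply: eq_bigr.
Qed.

Variable c : C.

Lemma cnt0 (s : seq C) : (count (predC1 c) s == 0%N) = all (pred1 c) s.
Proof.
elim: s => //= a s IH; by case: (a == c); rewrite /= ?add0n ?IH.
Qed.

Lemma cnt0_tuple N (t : N.-tuple C) :
  (count (predC1 c) t == 0%N) = (t == nseq_tuple N c).
Proof.
rewrite cnt0; apply/all_pred1P/eqP => [E|->].
  by apply: val_inj; rewrite /= E size_tuple.
by rewrite /= size_nseq.
Qed.

Lemma sum_split N (F : seq C -> R) :
  \sum_(t : N.-tuple C) F t =
  F (nseq N c) + \sum_(t : N.-tuple C | count (predC1 c) t != 0%N) F t.
Proof.
rewrite (bigID (fun t : N.-tuple C => count (predC1 c) t == 0%N)) /=.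
by rewrite (big_pred1 (nseq_tuple N c)) // => t; rewrite /= cnt0_tuple.
Qed.

Lemma sum_count (P : pred C) (s : seq C) :
  (\sum_(c' | P c') count (pred1 c') s)%N = count P s.
Proof.
elim: s => [|a s IH] /=; first by rewrite big1.
rewrite big_split /= IH; congr (_ + _)%N.
case Pa: (P a).
  rewrite (bigD1 a) //= eqxx big1 // => c' /andP [_ ne].
  by rewrite eq_sym (negbTE ne).
rewrite big1 // => c' Pc'; case: eqP => // ac'.
by rewrite ac' Pc' in Pa.
Qed.

Definition Wt N c' := \sum_(t : N.-tuple C | count (predC1 c) t != 0%N)
   (count (pred1 c') t)%:R / (count (predC1 c) t)%:R :> R.

Lemma Wt_sym N c1 c2 : c1 != c -> c2 != c -> Wt N c1 = Wt N c2.
Proof.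
move=> h1 h2; pose s := tperm c1 c2.
have sc : s c = c by rewrite tpermD // eq_sym.
have inj : injective (fun t : N.-tuple C => map_tuple s t).
  move=> t1 t2 /(congr1 val) /= /(inj_map (@perm_inj _ s)) E; exact: val_inj.
rewrite /Wt (reindex_inj inj) /=; apply: eq_big => t.
  rewrite count_map; congr (_ != _); apply: eq_count => y /=.
  by rewrite -{1}sc (inj_eq (@perm_inj _ s)).
move=> _; rewrite !count_map; congr (_%:R / _%:R).
  apply: eq_count => y /=; rewrite -{1}(tpermR c1 c2) -/s.
  by rewrite (inj_eq (@perm_inj _ s)).
apply: eq_count => y /=; by rewrite -{1}sc (inj_eq (@perm_inj _ s)).
Qed.

Lemma sum_wt N (t : N.-tuple C) : count (predC1 c) t != 0%N ->
  \sum_(c' | c' != c) (count (pred1 c') t)%:R / (count (predC1 c) t)%:R = 1 :> R.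
Proof.
move=> h; rewrite -mulr_suml -natr_sum.
have := sum_count (predC1 c) t => /= ->.
by rewrite divff // pnatr_eq0.
Qed.

Lemma comb_key N (E : seq C -> R) (g : C -> R) :
  (1 < #|C|)%N ->
  (forall (t : N.-tuple C) c', c' != c -> c' \in (t : seq C) -> g c' <= E t) ->
  E (nseq N c) + ((#|C|%:R ^+ N - 1) / (#|C|%:R - 1)) * \sum_(c' | c' != c) g c'
  <= \sum_(t : N.-tuple C) E t.
Proof.
move=> hC hE.
rewrite (sum_split N E) lerD2l.
set K := (_ / _).
have n1 : (#|C|%:R - 1 : R) != 0.
  by rewrite subr_eq0 pnatr_eq1; apply: contraTneq hC => ->.
have tot : \sum_(c' | c' != c) Wt N c' = #|C|%:R ^+ N - 1 :> R.
  rewrite /Wt exchange_big /=.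
  rewrite (eq_bigr (fun _ => 1)) => [|t ht]; last exact: sum_wt.
  have := sum_split N (fun _ => 1 : R).
  rewrite sumr_const card_tuple natrX => ->.
  by rewrite addrAC subrr add0r.
have Wv : forall c1, c1 != c -> Wt N c1 = K.
  move=> c1 h1.
  have : \sum_(c' | c' != c) Wt N c' = (#|C|%:R - 1) * Wt N c1.
    rewrite (eq_bigr (fun _ => Wt N c1)) => [|c' h']; last exact: Wt_sym.
    rewrite sumr_const.
    have -> : #|[pred c' | c' != c]| = #|C|.-1 by exact: cardC1.
    by rewrite -[Wt N c1 *+ _]mulr_natl -subn1 natrB // ltnW.
  rewrite tot /K.
  by move=> ->; rewrite [_ * Wt N c1]mulrC mulfK.
apply: (@le_trans _ _ (\sum_(t : N.-tuple C | count (predC1 c) t != 0%N)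
   \sum_(c' | c' != c) (count (pred1 c') t)%:R / (count (predC1 c) t)%:R * g c')).
  rewrite exchange_big /= mulr_sumr; apply: ler_sum => c' h'.
  by rewrite -mulr_suml -/(Wt N c') Wv // mulrC.
apply: ler_sum => t ht.
apply: (@le_trans _ _ ((\sum_(c' | c' != c) (count (pred1 c') t)%:R /
   (count (predC1 c) t)%:R) * E t)); last by rewrite sum_wt // mul1r.
rewrite mulr_suml; apply: ler_sum => c' h'.
have [z|nz] := eqVneq (count (pred1 c') t) 0%N.
  by rewrite z !mul0r.
apply: ler_wpM2l; first by rewrite divr_ge0 ?ler0n.
by apply: hE => //; rewrite -has_pred1 has_count lt0n nz.
Qed.

End Comb.

Section Tasks.
Context {R : realType} {C : finType} (k : nat).

Definition Kc (c c' : C) : R := \sum_(T in tasks k | (c \in T) && (c' \in T)) 1.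

Lemma exch (J : C -> C -> R) :
  \sum_(T in tasks k) \sum_(c in T) \sum_(c' in T | c' != c) J c c' =
  \sum_(c : C) \sum_(c' | c' != c) Kc c c' * J c c'.
Proof.
transitivity (\sum_(T in tasks k) \sum_(c : C) \sum_(c' | c' != c)
   (if (c \in T) && (c' \in T) then J c c' else 0)).
  apply: eq_bigr => T _; rewrite big_mkcond /=; apply: eq_bigr => c _.
  case: (c \in T) => /=; last by rewrite big1.
  by rewrite big_mkcondl.
rewrite exchange_big /=; apply: eq_bigr => c _.
rewrite exchange_big /=; apply: eq_bigr => c' _.
by rewrite -big_mkcondr /= /Kc mulr_suml; under [RHS]eq_bigr do rewrite mul1r.
Qed.

Lemma Kc_sym c c' : Kc c c' = Kc c' c.
Proof. by rewrite /Kc; apply: eq_bigl => T; rewrite [(c \in T) && _]andbC. Qed.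

Lemma Kc_fst c c' c2 : c != c' -> c2 != c' -> Kc c c' = Kc c2 c'.
Proof.
move=> h1 h2; pose s := tperm c c2.
have sc : s c' = c' by rewrite tpermD // eq_sym.
have inj : injective (fun T : {set C} => s @: T).
  by apply: imset_inj; exact: perm_inj.
rewrite /Kc (reindex_inj inj) /=; apply: eq_bigl => T.
rewrite /tasks !inE card_imset; last exact: perm_inj.
rewrite -{1}sc mem_imset; last exact: perm_inj.
by rewrite -{1}(tpermR c c2) -/s mem_imset //; exact: perm_inj.
Qed.

Lemma Kc_const a b a' b' : a != b -> a' != b' -> Kc a b = Kc a' b'.
Proof.
move=> hab hab'.
have [E|ne] := eqVneq a' b.
  rewrite (Kc_fst a b b') //; first by rewrite Kc_sym E.
  by rewrite -E eq_sym.
rewrite (Kc_fst a b a') // Kc_sym (Kc_fst b a' b') 1?eq_sym //.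
by rewrite Kc_sym.
Qed.

Lemma Kc_total :
  \sum_(c : C) \sum_(c' | c' != c) Kc c c' = #|@tasks C k|%:R * (k.+1%:R * k%:R).
Proof.
have := exch (fun _ _ => 1); under [RHS]eq_bigr do under eq_bigr do rewrite mulr1.
move=> <-.
rewrite -sumr_const mulr_suml; apply: eq_bigr => T; rewrite /tasks inE => /eqP hT.
rewrite mul1r -hT mulr_natl -sumr_const; apply: eq_bigr => c cT.
have E : \sum_(c' in T) (1 : R) = 1 + \sum_(c' in T | c' != c) 1.
  by rewrite (bigD1 c).
rewrite sumr_const hT in E.
by apply: (addrI 1); rewrite -E mulrS.
Qed.

Lemma sum_neq_const (c : C) (x : R) : \sum_(c' | c' != c) x = x * (#|C|%:R - 1).
Proof.
rewrite sumr_const.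
have -> : #|[pred c' | c' != c]| = #|C|.-1 by exact: cardC1.
have h : (0 < #|C|)%N by apply/card_gt0P; exists c.
by rewrite -[x *+ _]mulr_natr -subn1 natrB.
Qed.

Lemma sup_comb (J : C -> C -> R) : (1 < #|C|)%N -> (k.+1 <= #|C|)%N ->
  #|@tasks C k|%:R^-1 * \sum_(T in tasks k) \sum_(c in T)
      (k.+1%:R^-1 * \sum_(c' in T | c' != c) J c c')
  = k%:R / (#|C|%:R * (#|C|%:R - 1)) * \sum_(c : C) \sum_(c' | c' != c) J c c'.
Proof.
move=> hC hk.
have [a [b [_ _ ab]]] := card_gt1P hC.
have K0 : forall c c', c' != c -> Kc c c' = Kc a b.
  by move=> c c0 h; apply: (Kc_const c c0 a b) => //; rewrite eq_sym.
have tot := Kc_total.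
rewrite (eq_bigr (fun c => Kc a b * (#|C|%:R - 1))) in tot; last first.
  move=> c _; rewrite -(sum_neq_const c); apply: eq_bigr => c0 h; exact: K0.
have tot' : Kc a b * (#|C|%:R - 1) * #|C|%:R = #|@tasks C k|%:R * (k.+1%:R * k%:R).
  by rewrite -tot sumr_const mulr_natr.
have tk : #|@tasks C k|%:R != 0 :> R.
  by rewrite pnatr_eq0 -lt0n /tasks card_draws bin_gt0.
have n0 : #|C|%:R * (#|C|%:R - 1) != 0 :> R.
  rewrite mulf_eq0 negb_or pnatr_eq0 -lt0n subr_eq0 pnatr_eq1.
  by rewrite (ltn_trans _ hC) //; apply: contraTneq hC => ->.
have Kab : Kc a b = #|@tasks C k|%:R * (k.+1%:R * k%:R) / (#|C|%:R * (#|C|%:R - 1)).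
  by rewrite -tot' -mulrA [(_ - 1) * _]mulrC mulfK.
under eq_bigr do rewrite -mulr_sumr.
rewrite -mulr_sumr exch.
rewrite (eq_bigr (fun c => Kc a b * \sum_(c' | c' != c) J c c')); last first.
  move=> c _; rewrite mulr_sumr; apply: eq_bigr => c' h; by rewrite K0.
rewrite -mulr_sumr Kab.
set S := \sum_(i : C) _.
have k0 : k.+1%:R != 0 :> R by rewrite pnatr_eq0.
move: tk k0 n0; set t := #|tasks k|%:R; set q := k.+1%:R; set m := (_ * _) => tk k0 n0.
by field; rewrite n0 tk addrC natr1 pnatr_eq0.
Qed.

End Tasks.

Section Main.
Context {R : realType} {dX : measure_display} {X : measurableType dX}
  {C : finType} {dim : nat}.
Context (D : C -> probability X R) (f : X -> 'rV[R]_dim).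
Context (f_int : forall (c : C) (i : 'I_dim),
     (D c).-integrable [set: X] (fun x => (f x 0 i)%:E)).

Definition mu c := mean_classifier D f c.
Definition hx x y := dotv (f x) (f y).
Definition mv x c := dotv (f x) (mu c).

Lemma hx_E x y : (hx x y)%:E = (\sum_(i < dim) (f x 0 i)%:E * (f y 0 i)%:E)%E.
Proof. by rewrite /hx /dotv -sumEFin; apply: eq_bigr => i _; rewrite EFinM. Qed.

Lemma fZ_int c i a : (D c).-integrable setT (fun y => (a%:E * (f y 0 i)%:E)%E).
Proof. exact: (@integrableZl _ _ _ (D c) setT measurableT a _ (f_int c i)). Qed.

Lemma hx_int x c : (D c).-integrable setT (fun y => (hx x y)%:E).
Proof.
have -> : (fun y => (hx x y)%:E) =
    (fun y => (\sum_(i < dim) (f x 0 i)%:E * (f y 0 i)%:E)%E).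
  by apply/funext => y; exact: hx_E.
apply: integrable_sum => // i _.
exact: fZ_int.
Qed.

Lemma int_hx x c : (\int[D c]_y (hx x y)%:E = (mv x c)%:E)%E.
Proof.
under eq_integral do rewrite hx_E.
rewrite integral_sum //; last by move=> i; exact: fZ_int.
rewrite /mv /dotv -sumEFin; apply: eq_bigr => i _.
rewrite integralZl //; last exact: f_int.
rewrite /mu /mean_classifier mxE EFinM fineK //.
exact: (integrable_fin_num measurableT (f_int c i)).
Qed.

Lemma int_aff x c a b :
  (\int[D c]_y (a + b * (hx x y - mv x c))%:E = a%:E)%E.
Proof.
have E : forall y, (a + b * (hx x y - mv x c))%:E =
   ((EFin \o cst (a - b * mv x c)%R) y + b%:E * (hx x y)%:E)%E.
  by move=> y; rewrite /= -EFinM -EFinD; congr EFin; ring.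
under eq_integral do rewrite E.
rewrite integralD //; last 2 first.
- exact: finite_measure_integrable_cst.
- exact/integrableZl/hx_int.
rewrite integralZl //; last exact: hx_int.
rewrite int_hx /= integral_cst //.
rewrite [X in (_ * X)%E](_ : _ = 1%E); last exact: probability_setT.
rewrite mule1 -EFinM -EFinD.
by congr EFin; ring.
Qed.

Lemma rho_ge0 (c : C) : 0 <= @rho R C c.
Proof. by rewrite /rho invr_ge0 ler0n. Qed.

Lemma negs_ge0 n (F : seq X -> \bar R) :
  (forall s, (0 <= F s)%E) -> (0 <= negs_int D n F)%E.
Proof.
elim: n F => [|n IH] F F0 /=; first exact: F0.
rewrite /neg_int; apply: sume_ge0 => c _; apply: mule_ge0.
  by rewrite lee_fin rho_ge0.
by apply: integral_ge0 => x _; apply: IH => s; exact: F0.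
Qed.

Fixpoint csum n (B : seq C -> R) : R :=
  match n with
  | 0 => B [::]
  | n'.+1 => \sum_(c : C) @rho R C c * csum n' (fun s => B (c :: s))
  end.

Lemma csum_lin n (P K : seq C -> R) z :
  csum n (fun s => P s + K s * z) = csum n P + csum n K * z.
Proof.
elim: n P K => [|n IH] P K //=.
rewrite mulr_suml -big_split /=; apply: eq_bigr => c _.
by rewrite (IH (fun s => P (c :: s)) (fun s => K (c :: s))) mulrDr mulrA.
Qed.

Definition aff x (q : C -> R) (ts : seq C) (ys : seq X) : R :=
  \sum_(p <- zip ts ys) q p.1 * (hx x p.2 - mv x p.1).

Lemma negs_lb x n (F : seq X -> \bar R) (B : seq C -> R) (Q : seq C -> C -> R) :
  (forall s, (0 <= F s)%E) ->
  (forall ts ys, size ts = n -> size ys = n ->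
     ((B ts + aff x (Q ts) ts ys)%:E <= F ys)%E) ->
  ((csum n B)%:E <= negs_int D n F)%E.
Proof.
elim: n F B Q => [|n IH] F B Q F0 H /=.
  by have := H [::] [::] erefl erefl; rewrite /aff big_nil addr0.
rewrite /neg_int -sumEFin; apply: lee_sum => c _.
rewrite EFinM; apply: lee_wpmul2l; first by rewrite lee_fin rho_ge0.
rewrite -(int_aff x c (csum n (fun s => B (c :: s))) (csum n (fun s => Q (c :: s) c))).
apply: int_mono => [y|y]; first by apply: negs_ge0 => s; exact: F0.
rewrite -csum_lin.
apply: (IH _ _ (fun s => Q (c :: s))) => [s|ts ys hts hys]; first exact: F0.
have := H (c :: ts) (y :: ys); rewrite /= hts hys => /(_ erefl erefl).
by rewrite /aff /= big_cons /= addrA.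
Qed.

Definition Sv x c (ts : seq C) := expR (mv x c) + \sum_(t <- ts) expR (mv x t).
Definition ell x c ts := ln (Sv x c ts) - mv x c.

Lemma loss_eq x xp ys : contrast_loss f x xp ys =
  ln (expR (hx x xp) + \sum_(y <- ys) expR (hx x y)) - hx x xp.
Proof.
rewrite /contrast_loss -/(hx x xp).
have s0 : 0 <= \sum_(y <- ys) expR (dotv (f x) (f y)).
  by apply: sumr_ge0 => y _; rewrite ltW ?expR_gt0.
have p0 : 0 < expR (hx x xp) + \sum_(y <- ys) expR (dotv (f x) (f y)).
  by rewrite ltr_wpDr ?expR_gt0.
rewrite lnM ?posrE ?expR_gt0 ?invr_gt0 // lnV ?posrE // expRK.
by rewrite opprD opprK addrC.
Qed.

Lemma loss_ge0 x xp ys : 0 <= contrast_loss f x xp ys.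
Proof.
rewrite loss_eq subr_ge0 -[X in X <= _]expRK.
rewrite ler_ln ?posrE ?expR_gt0 ?ltr_wpDr ?expR_gt0 //; last first.
  by apply: sumr_ge0 => y _; rewrite ltW ?expR_gt0.
by rewrite lerDl; apply: sumr_ge0 => y _; rewrite ltW ?expR_gt0.
Qed.

Lemma inner_lb x c N :
  ((csum N (ell x c))%:E <=
   \int[D c]_xp negs_int D N (fun xs => (contrast_loss f x xp xs)%:E))%E.
Proof.
rewrite -(int_aff x c (csum N (ell x c))
           (csum N (fun ts => expR (mv x c) / Sv x c ts - 1))).
apply: int_mono => [xp|xp].
  by apply: negs_ge0 => s; rewrite lee_fin loss_ge0.
rewrite -csum_lin.
apply: (negs_lb x _ _ _ (fun ts t => expR (mv x t) / Sv x c ts)) => [s|ts ys hts hys].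
  by rewrite lee_fin loss_ge0.
rewrite lee_fin loss_eq.
have T := lse_tangent ((hx x xp, mv x c) :: [seq (hx x p.2, mv x p.1) | p <- zip ts ys]) erefl.
rewrite !big_cons !big_map /= in T.
have E1 : \sum_(p <- zip ts ys) expR (mv x p.1) = \sum_(t <- ts) expR (mv x t).
  by rewrite -[in RHS](@unzip1_zip _ _ ts ys) ?hts ?hys // big_map.
have E2 : \sum_(p <- zip ts ys) expR (hx x p.2) = \sum_(y <- ys) expR (hx x y).
  by rewrite -[in RHS](@unzip2_zip _ _ ts ys) ?hts ?hys // big_map.
rewrite E1 E2 -/(Sv x c ts) in T.
rewrite /ell /aff.
move: T.
set S := \sum_(j <- zip ts ys) (expR (mv x j.1) / Sv x c ts * (hx x j.2 - mv x j.1)).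
rewrite mulrBl mul1r.
set pu := expR (mv x c) / Sv x c ts * (hx x xp - mv x c).
lra.
Qed.

Definition rr : R := (#|C|%:R)^-1.

Lemma csum_tuple n (B : seq C -> R) :
  csum n B = rr ^+ n * \sum_(t : n.-tuple C) B t.
Proof.
elim: n B => [|n IH] B /=.
  rewrite expr0 mul1r (big_pred1 [tuple]) // => t.
  by rewrite /= (tuple0 t); apply/esym/eqP.
rewrite big_tuple_cons exprS mulr_sumr; apply: eq_bigr => c _.
by rewrite IH mulrA.
Qed.

Lemma sum_nseq N a (F : C -> R) : \sum_(t <- nseq N a) F t = N%:R * F a.
Proof.
elim: N => [|N IH]; first by rewrite big_nil mul0r.
by rewrite /= big_cons IH mulrS mulrDl mul1r.
Qed.

Lemma le_sum_mem (F : C -> R) a (s : seq C) : (forall t, 0 <= F t) ->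
  a \in s -> F a <= \sum_(t <- s) F t.
Proof.
move=> F0; elim: s => //= b s IH; rewrite inE big_cons => /orP [/eqP->|/IH h].
  by rewrite lerDl sumr_ge0.
by apply: le_trans h _; rewrite lerDr.
Qed.

Lemma Sv_gt0 x c ts : 0 < Sv x c ts.
Proof.
by rewrite /Sv ltr_wpDr ?expR_gt0 // sumr_ge0 // => t _; rewrite ltW ?expR_gt0.
Qed.

Lemma ell_nseq x c N : ell x c (nseq N c) = ln (N.+1%:R).
Proof.
rewrite /ell /Sv sum_nseq.
have -> : expR (mv x c) + N%:R * expR (mv x c) = N.+1%:R * expR (mv x c).
  by rewrite -[in RHS]natr1 mulrDl mul1r addrC.
by rewrite lnM ?posrE ?ltr0Sn ?expR_gt0 // expRK addrK.
Qed.

Lemma ell_mono x c c' ts : c' \in ts -> ell x c [:: c'] <= ell x c ts.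
Proof.
move=> h; rewrite /ell lerD2r ler_ln ?posrE ?Sv_gt0 // /Sv lerD2l big_cons big_nil addr0.
by apply: (le_sum_mem (fun t => expR (mv x t))) => // t; rewrite ltW ?expR_gt0.
Qed.

Lemma ell_lb x c N : (1 < #|C|)%N ->
  rr ^+ N * ln (N.+1%:R) + (1 - rr ^+ N) / (#|C|%:R - 1) *
     \sum_(c' | c' != c) ell x c [:: c'] <= csum N (ell x c).
Proof.
move=> hC; rewrite csum_tuple.
have H := comb_key c N (ell x c) (fun c' => ell x c [:: c']) hC
   (fun t c' _ h => ell_mono x c c' t h).
rewrite ell_nseq in H.
have p0 : 0 < rr ^+ N by rewrite exprn_gt0 // invr_gt0 ltr0n (ltn_trans _ hC).
apply: le_trans (ler_wpM2l (ltW p0) H).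
have n1 : (#|C|%:R - 1 : R) != 0.
  by rewrite subr_eq0 pnatr_eq1; apply: contraTneq hC => ->.
have nn : (#|C|%:R : R) != 0 by rewrite pnatr_eq0 -lt0n (ltn_trans _ hC).
rewrite /rr exprVn.
set S := \sum_(c' | _) _.
have pn : (#|C|%:R ^+ N : R) != 0 by rewrite expf_neq0.
move: pn n1; set p := (#|C|%:R ^+ N : R); set m := (#|C|%:R - 1 : R) => pn n1.
rewrite le_eqVlt; apply/orP; left; apply/eqP; by field; rewrite n1 pn.
Qed.

Definition gfun c c' x := ln (expR (mv x c) + expR (mv x c')) - mv x c.

Lemma ell1 x c c' : ell x c [:: c'] = gfun c c' x.
Proof. by rewrite /ell /Sv /gfun big_cons big_nil addr0. Qed.

Lemma mv_E x c : (mv x c)%:E = (\sum_(i < dim) (mu c 0 i)%:E * (f x 0 i)%:E)%E.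
Proof. by rewrite /mv /dotv -sumEFin; apply: eq_bigr => i _; rewrite EFinM muleC. Qed.

Lemma mv_int c0 c : (D c0).-integrable setT (fun x => (mv x c)%:E).
Proof.
have -> : (fun x => (mv x c)%:E) =
    (fun x => (\sum_(i < dim) (mu c 0 i)%:E * (f x 0 i)%:E)%E).
  by apply/funext => x; exact: mv_E.
apply: integrable_sum => // i _; exact: fZ_int.
Qed.

Lemma mv_meas (c0 : C) c : measurable_fun setT (fun x => mv x c).
Proof.
apply/measurable_realfun.measurable_EFinP.
exact: (measurable_int _ (mv_int c0 c)).
Qed.

Lemma gfun_meas (c0 : C) c c' : measurable_fun setT (gfun c c').
Proof.
apply: measurable_realfun.measurable_funB; last exact: mv_meas c0 c.
have h : measurable_fun setT (fun x => expR (mv x c) + expR (mv x c')).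
  have h1 : measurable_fun setT (fun x => expR (mv x c)).
    exact: (measurableT_comp (@measurable_realfun.measurable_expR R) (mv_meas c0 c)).
  have h2 : measurable_fun setT (fun x => expR (mv x c')).
    exact: (measurableT_comp (@measurable_realfun.measurable_expR R) (mv_meas c0 c')).
  exact: (measurable_realfun.measurable_funD h1 h2).
exact: (measurableT_comp (@measurable_realfun.measurable_ln R) h).
Qed.

Lemma gfun_ge0 c c' x : 0 <= gfun c c' x.
Proof.
rewrite /gfun subr_ge0 -[X in X <= _]expRK ler_ln ?posrE ?expR_gt0 ?addr_gt0 //.
all: by rewrite ?lerDl ?ltW ?expR_gt0.
Qed.

Lemma gfun_le c c' x : gfun c c' x <= 1 + `|mv x c| + `|mv x c'|.
Proof.
set a := mv x c; set b := mv x c'; rewrite /gfun -/a -/b.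
have e2 : 2 <= expR 1 :> R by have := expR_ge1Dx (1 : R).
have hab : `|b - a| <= `|a| + `|b|.
  by apply: le_trans (ler_normD _ _) _; rewrite normrN addrC.
suff : ln (expR a + expR b) <= 1 + (a + `|b - a|) by lra.
set u := a + `|b - a|.
have h1 : expR a <= expR u by rewrite ler_expR lerDl.
have h2 : expR b <= expR u.
  by rewrite ler_expR -lerBlDl; exact: ler_norm.
have h3 : 2 * expR u <= expR 1 * expR u.
  by rewrite ler_wpM2r // ltW ?expR_gt0.
have h4 : expR a + expR b <= expR (1 + u) by rewrite expRD; lra.
rewrite -ler_expR lnK // posrE addr_gt0 ?expR_gt0 //.
Qed.

Lemma gfun_int c0 c c' : (D c0).-integrable setT (fun x => (gfun c c' x)%:E).
Proof.
have hint := integrableD measurableT (integrableD measurableT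
     (@finite_measure_integrable_cst _ _ _ (D c0) setT 1 measurableT)
     (integrable_abse (mv_int c0 c))) (integrable_abse (mv_int c0 c')).
apply: (le_integrable measurableT); last exact: hint.
  exact/measurable_realfun.measurable_EFinP/gfun_meas.
move=> x _ /=; rewrite lee_fin ger0_norm ?gfun_ge0 //.
by rewrite ger0_norm ?gfun_le // addr_ge0 // addr_ge0.
Qed.

Definition J c c' : R := fine (\int[D c]_x (gfun c c' x)%:E)%E.

Lemma int_gfun c c' : (\int[D c]_x (gfun c c' x)%:E)%E = (J c c')%:E.
Proof. by rewrite /J fineK // (integrable_fin_num measurableT (gfun_int c c c')). Qed.

Lemma J_ge0 c c' : 0 <= J c c'.
Proof. by rewrite -lee_fin -int_gfun integral_ge0 // => x _; rewrite lee_fin gfun_ge0. Qed.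

Lemma dotvC (u v : 'rV[R]_dim) : dotv u v = dotv v u.
Proof. by apply: eq_bigr => i _; rewrite mulrC. Qed.

Lemma ln_sub (al : R) (r : seq C) (P : pred C) (a : C -> R) : 0 < al ->
  (forall i, 0 <= a i) ->
  ln (al + \sum_(i <- r | P i) a i) - ln al <= \sum_(i <- r | P i) (ln (al + a i) - ln al).
Proof.
move=> al0 a0; elim: r => [|i r IH]; first by rewrite !big_nil addr0 subrr.
rewrite !big_cons; case: (P i) => //.
set S := \sum_(j <- r | P j) a j in IH *.
have S0 : 0 <= S by apply: sumr_ge0.
suff : ln (al + (a i + S)) + ln al <= ln (al + a i) + ln (al + S) by lra.
have p1 : 0 < al + a i by rewrite ltr_wpDr.
have p2 : 0 < al + S by rewrite ltr_wpDr.
have p3 : 0 < al + (a i + S) by rewrite ltr_wpDr // addr_ge0.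
rewrite -!lnM ?posrE // ler_ln ?posrE ?mulr_gt0 //.
have := mulr_ge0 (a0 i) S0; nra.
Qed.

Lemma sup_loss_eq (T : {set C}) (x : X) (c : C) : c \in T ->
  sup_loss f T (mean_classifier D f) x c =
  ln (expR (mv x c) + \sum_(c' in T | c' != c) expR (mv x c')) - ln (expR (mv x c)).
Proof.
move=> cT; rewrite /sup_loss (bigD1 c cT) /= -/(mu c).
have -> : \sum_(i in T | i != c) expR (dotv (mean_classifier D f i) (f x)) =
          \sum_(c' in T | c' != c) expR (mv x c').
  by apply: eq_bigr => i _; rewrite dotvC.
rewrite dotvC -/(mv x c).
have s0 : 0 <= \sum_(c' in T | c' != c) expR (mv x c').
  by apply: sumr_ge0 => i _; rewrite ltW ?expR_gt0.
rewrite lnM ?posrE ?expR_gt0 ?invr_gt0 ?ltr_wpDr ?expR_gt0 //.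
rewrite lnV ?posrE ?ltr_wpDr ?expR_gt0 //.
by rewrite opprB.
Qed.

Lemma sup_bound (T : {set C}) (x : X) (c : C) : c \in T ->
  sup_loss f T (mean_classifier D f) x c <= \sum_(c' in T | c' != c) gfun c c' x.
Proof.
move=> cT; rewrite sup_loss_eq //.
apply: le_trans (ln_sub _ _ _ _ (expR_gt0 _) (fun i => ltW (expR_gt0 _))) _.
by apply: ler_sum => c' _; rewrite /gfun expRK.
Qed.

Lemma sup_loss_ge0 (T : {set C}) (x : X) (c : C) : c \in T -> 0 <= sup_loss f T (mean_classifier D f) x c.
Proof.
move=> cT; rewrite sup_loss_eq // subr_ge0 ler_ln ?posrE ?expR_gt0 ?ltr_wpDr ?expR_gt0 //.
  by rewrite lerDl sumr_ge0 // => i _; rewrite ltW ?expR_gt0.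
by rewrite sumr_ge0 // => i _; rewrite ltW ?expR_gt0.
Qed.

Lemma rho_rr (c : C) : @rho R C c = rr.
Proof. by []. Qed.

Lemma tau_val N : (0 < #|C|)%N -> @tau_plus R C N = rr ^+ N.
Proof.
move=> hC.
have E : \sum_(c : C) \sum_(t : N.-tuple C | all (fun ci => ci == c) t)
     (@rho R C c * \prod_(i < N) @rho R C (tnth t i)) = @tau_plus R C N.
  by rewrite pair_big_dep /=; apply: eq_bigl => -[c t].
rewrite -E.
rewrite (eq_bigr (fun c => rr * rr ^+ N)); last first.
  move=> c _; rewrite (big_pred1 (nseq_tuple N c)); last first.
    by move=> t; rewrite /= -cnt0_tuple cnt0.
  by rewrite prodr_const card_ord.
rewrite sumr_const -[_ *+ _]mulr_natr mulrC mulrA /rr mulfV ?mul1r //.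
by rewrite pnatr_eq0 -lt0n.
Qed.

Lemma rho_cond_val k (T : {set C}) (c : C) : T \in tasks k ->
  @rho_cond R C T c = k.+1%:R^-1.
Proof.
rewrite /tasks inE => /eqP hT.
rewrite /rho_cond sumr_const hT /rho -[_ *+ k.+1]mulr_natr invfM mulrA mulfV ?mul1r //.
by rewrite invr_eq0 pnatr_eq0 -lt0n; apply/card_gt0P; exists c.
Qed.

Lemma part1 k : (L_sup_k D f k <= L_sup_mu_k D f k)%E.
Proof.
rewrite /L_sup_k /L_sup_mu_k; apply: lee_wpmul2l.
  by rewrite lee_fin invr_ge0 ler0n.
apply: lee_sum => T _; rewrite /L_sup /L_sup_mu.
by apply: ereal_inf_lbound; exists (mean_classifier D f).
Qed.

Lemma sup_part (T : {set C}) (c : C) : c \in T ->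
  (\int[D c]_x (sup_loss f T (mean_classifier D f) x c)%:E <=
   (\sum_(c' in T | c' != c) J c c')%:E)%E.
Proof.
move=> cT; rewrite -sumEFin.
under eq_bigr do rewrite -int_gfun.
rewrite -integral_sum //; last by move=> c'; exact: gfun_int.
apply: int_mono => x; first by apply: sume_ge0 => c' _; rewrite lee_fin gfun_ge0.
by rewrite sumEFin lee_fin sup_bound.
Qed.

Lemma L1 k : (1 < #|C|)%N -> (k.+1 <= #|C|)%N ->
  (L_sup_mu_k D f k <= (k%:R / (#|C|%:R * (#|C|%:R - 1)) *
     \sum_(c : C) \sum_(c' | c' != c) J c c')%:E)%E.
Proof.
move=> hC hkC; rewrite -sup_comb // /L_sup_mu_k /L_sup_mu /sup_risk.
rewrite EFinM; apply: lee_wpmul2l; first by rewrite lee_fin invr_ge0 ler0n.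
rewrite -sumEFin; apply: lee_sum => T hT.
rewrite -sumEFin; apply: lee_sum => c hc.
rewrite (rho_cond_val k T c hT) EFinM; apply: lee_wpmul2l.
  by rewrite lee_fin invr_ge0 ler0n.
exact: sup_part.
Qed.

Lemma sumg_int c : (D c).-integrable setT
  (fun x => (\sum_(c' | c' != c) (gfun c c' x)%:E)%E).
Proof. by apply: integrable_sum => // c' _; exact: gfun_int. Qed.

Lemma L2 N : (1 < #|C|)%N ->
  ((\sum_(c : C) rr * (rr ^+ N * ln (N.+1%:R) + (1 - rr ^+ N) / (#|C|%:R - 1) *
       \sum_(c' | c' != c) J c c'))%:E <= L_un D f N)%E.
Proof.
move=> hC; rewrite /L_un -sumEFin; apply: lee_sum => c _.
rewrite EFinM; apply: lee_wpmul2l; first by rewrite lee_fin rho_ge0.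
set A := rr ^+ N * ln (N.+1%:R); set K := (1 - rr ^+ N) / (#|C|%:R - 1).
have E : ((A + K * \sum_(c' | c' != c) J c c')%:E =
   \int[D c]_x ((EFin \o cst A) x + K%:E * \sum_(c' | c' != c) (gfun c c' x)%:E))%E.
  rewrite integralD //; last 2 first.
  - exact: (@finite_measure_integrable_cst _ _ _ (D c) setT A measurableT).
  - exact: (@integrableZl _ _ _ (D c) setT measurableT K _ (sumg_int c)).
  rewrite /= integral_cst // [X in (_ * X)%E](_ : _ = 1%E); last exact: probability_setT.
  rewrite integralZl //; last exact: sumg_int.
  rewrite integral_sum //; last by move=> c'; exact: gfun_int.
  rewrite (eq_bigr (fun c' => (J c c')%:E)); last by move=> c' _; exact: int_gfun.
  by rewrite mule1 sumEFin -EFinM -EFinD.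
rewrite E; apply: int_mono => x.
  by apply: integral_ge0 => xp _; apply: negs_ge0 => s; rewrite lee_fin loss_ge0.
apply: le_trans (inner_lb x c N).
rewrite /= sumEFin -EFinM -EFinD lee_fin.
have h := ell_lb x c N hC.
have e : \sum_(c' | c' != c) ell x c [:: c'] = \sum_(c' | c' != c) gfun c c' x.
  by apply: eq_bigr => c' _; exact: ell1.
by rewrite e in h.
Qed.

Lemma part2 N k : (1 <= N)%N -> (2 <= k.+1)%N -> (k.+1 <= #|C|)%N ->
  (L_sup_mu_k D f k <= ((k%:R / (1 - @tau_plus R C N))%:E *
      (L_un D f N - (@tau_plus R C N * ln (N.+1)%:R)%:E))%E)%E.
Proof.
move=> hN hk hkC; have hC : (1 < #|C|)%N := leq_trans hk hkC.
have hC0 : (0 < #|C|)%N := ltnW hC.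
rewrite tau_val //.
apply: le_trans (L1 k hC hkC) _.
have n1r : 1 < (#|C|%:R : R) by rewrite ltr1n.
have nn : (#|C|%:R : R) != 0 by rewrite pnatr_eq0 -lt0n.
have n1 : (#|C|%:R - 1 : R) != 0 by rewrite subr_eq0 gt_eqF.
have pg1 : 1 < (#|C|%:R : R) ^+ N by rewrite exprn_egt1 // -lt0n.
have rN : rr ^+ N = ((#|C|%:R : R) ^+ N)^-1 by rewrite /rr exprVn.
have p1 : rr ^+ N < 1 by rewrite rN invf_lt1 // (lt_trans _ pg1).
have coef0 : 0 <= k%:R / (1 - rr ^+ N) by rewrite divr_ge0 // subr_ge0 ltW.
apply: le_trans (lee_wpmul2l _ (leeB (L2 N hC) (le_refl _))); last first.
  by rewrite lee_fin.
rewrite -EFinB -EFinM lee_fin.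
set SS := \sum_(c : C) \sum_(c' | c' != c) J c c'.
have Z2E : \sum_(c : C) rr * (rr ^+ N * ln (N.+1%:R) + (1 - rr ^+ N) / (#|C|%:R - 1) *
       \sum_(c' | c' != c) J c c') =
   rr ^+ N * ln (N.+1%:R) + rr * ((1 - rr ^+ N) / (#|C|%:R - 1)) * SS.
  rewrite (eq_bigr (fun c => rr * (rr ^+ N * ln (N.+1%:R)) +
     rr * ((1 - rr ^+ N) / (#|C|%:R - 1)) * \sum_(c' | c' != c) J c c')); last first.
    by move=> c _; rewrite mulrDr [X in _ + X]mulrA.
  rewrite big_split /= sumr_const -[_ *+ _]mulr_natr -mulr_sumr.
  rewrite mulrC; congr (_ + _); rewrite /rr (_ : #|xpredT| = #|C|) //. field. by rewrite pnatr_eq0 -lt0n.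
rewrite Z2E rN /rr.
move: (pg1) nn n1; set p := (#|C|%:R : R) ^+ N; set m := (#|C|%:R : R) => pg nn n1.
have p0 : p != 0 by rewrite gt_eqF // (lt_trans _ pg).
have p1' : p - 1 != 0 by rewrite subr_eq0 gt_eqF.
rewrite le_eqVlt; apply/orP; left; apply/eqP.
clear Z2E; move: (ln (N.+1%:R)) => L; move: (k%:R : R) => kk; move: SS => S.
by field; rewrite nn n1 p0 p1'.
Qed.

Theorem main_thm N k : (1 <= N)%N -> (2 <= k.+1)%N -> (k.+1 <= #|C|)%N ->
  (L_sup_k D f k <= L_sup_mu_k D f k)%E /\
  (L_sup_mu_k D f k <= ((k%:R / (1 - @tau_plus R C N))%:E *
      (L_un D f N - (@tau_plus R C N * ln (N.+1)%:R)%:E))%E)%E.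
Proof. by move=> hN hk hkC; split; [exact: part1 | exact: part2]. Qed.

End Main.

Theorem proposition3p3 (R : realType) (dX : measure_display) (X : measurableType dX)
  (C : finType) (dim : nat) (D : C -> probability X R) (f : X -> 'rV[R]_dim)
  (f_int : forall (c : C) (i : 'I_dim),
     (D c).-integrable [set: X] (fun x => (f x 0 i)%:E))
  (N k : nat) (hN : (1 <= N)%N) (hk : (2 <= k.+1)%N) (hkC : (k.+1 <= #|C|)%N) :
  (L_sup_k D f k <= L_sup_mu_k D f k)%E /\
  (L_sup_mu_k D f k <=
     ((k%:R / (1 - @tau_plus R C N))%:E *
      (L_un D f N - (@tau_plus R C N * ln (N.+1)%:R)%:E))%E)%E.
Proof. exact: (@main_thm R dX X C dim D f f_int N k hN hk hkC). Qed.
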